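(* Let $\mathcal P\subset\mathbb R^d$ be compact, $\{p_i\}_{i=1}^K\subset\mathcal P$ anchors with fill distance $h_K:=\sup_{p\in\mathcal P}\min_i\|p-p_i\|$, and $i(p)\in\arg\min_i\|p-p_i\|$. Fix $(z,t)$. Assume: (i) there is $L<\infty$ with $\|f^\star(z',p,t')-f^\star(z',p',t')\|\le L\|p-p'\|$ for all $z',t'$ and $p,p'\in\mathcal P$; (ii) $\hat f(z,p,t)=\hat f(z,p_{i(p)},t)$ for all $p\in\mathcal P$; (iii) for each anchor we observe $y_{ij}=f^\star(z,p_i,t)+\varepsilon_{ij}$, $j=1,\dots,n_i$, with $\varepsilon_{ij}\in\mathbb R^m$ independent, mean-zero, and coordinate-wise $\sigma_i$-sub-Gaussian, and $\hat f(z,p_i,t)=\frac1{n_i}\sum_j y_{ij}$. Let $n_{\min}=\min_i n_i$ and $\sigma_{\max}=\max_i\sigma_i$. Then for any $\delta\in(0,1)$, with probability at least $1-\delta$, $$\sup_{p\in\mathcal P}\|\hat f(z,p,t)-f^\star(z,p,t)\|_2\le\sigma_{\max}\sqrt{\frac{2m\log(2mK/\delta)}{n_{\min}}}+Lh_K.$$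
   Context: A real random variable $X$ is $\sigma$-sub-Gaussian if $\mathbb E[e^{\lambda X}]\le e^{\sigma^2\lambda^2/2}$ for all $\lambda\in\mathbb R$. In (i) the norm on the left is the Euclidean norm on $\mathbb R^m$. *)

(* Defs.v *)
From HB Require Import structures.
From mathcomp Require Import all_boot all_order all_algebra.
From mathcomp Require Import all_classical all_reals all_analysis.
Set Implicit Arguments. Unset Strict Implicit. Unset Printing Implicit Defensive.
Import Order.TTheory GRing.Theory Num.Theory.
Import numFieldNormedType.Exports.
Local Open Scope classical_set_scope.
Local Open Scope ring_scope.

Definition enorm (R : realType) (k : nat) (v : 'rV[R]_k) : R :=
  Num.sqrt (\sum_(i < k) (v ord0 i) ^+ 2).

(* A row vector viewed as an m-tuple (m.-tuple R carries the product
   sigma-algebra of the Borel sigma-algebras). *)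
Definition tuple_of_row (R : realType) (k : nat) (v : 'rV[R]_k) : k.-tuple R :=
  [tuple v ord0 i | i < k].

Definition mutually_independent (dom : measure_display) (Omega : measurableType dom)
  (R : realType) (P : probability Omega R) (I : finType) (k : nat)
  (X : I -> Omega -> 'rV[R]_k) : Prop :=
  forall (J : {set I}) (B : I -> set (k.-tuple R)),
    (forall a, measurable (B a)) ->
    P (\big[setI/setT]_(a in J) ((fun w => tuple_of_row (X a w)) @^-1` B a)) =
    (\prod_(a in J) P ((fun w => tuple_of_row (X a w)) @^-1` B a))%E.

Definition mean_zero (dom : measure_display) (Omega : measurableType dom)
  (R : realType) (P : probability Omega R) (X : Omega -> R) : Prop :=
  P.-integrable setT (EFin \o X) /\ (\int[P]_w (X w)%:E = 0)%E.

Definition sub_gaussian (dom : measure_display) (Omega : measurableType dom)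
  (R : realType) (P : probability Omega R) (sigma : R) (X : Omega -> R) : Prop :=
  forall lam : R,
    (\int[P]_w (expR (lam * X w))%:E <= (expR (sigma ^+ 2 * lam ^+ 2 / 2))%:E)%E.

Definition fill_distance (R : realType) (d K : nat) (Pset : set 'rV[R]_d)
  (anc : 'I_K -> 'rV[R]_d) : R :=
  sup [set inf [set enorm (p - anc i) | i in [set: 'I_K]] | p in Pset].

(* n_min = min_i n_i (for K >= 1) and sigma_max = max_i sigma_i (sigma_i >= 0). *)
Definition nmin (K : nat) (n : 'I_K -> nat) : nat :=
  \big[minn/(\max_(i < K) n i)%N]_(i < K) n i.
Definition sigma_max (R : realType) (K : nat) (sigma : 'I_K -> R) : R :=
  \big[Order.max/0%R]_(i < K) sigma i.

(* Main.v *)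
Require Import Defs.
From HB Require Import structures.
From mathcomp Require Import all_boot all_order all_algebra.
From mathcomp Require Import all_classical all_reals all_analysis.
From mathcomp Require Import measurable_realfun.
Import Order.TTheory GRing.Theory Num.Theory.
Import numFieldNormedType.Exports.
Local Open Scope classical_set_scope.
Local Open Scope ring_scope.
From mathcomp Require Import ring lra.
Section enorm_lemmas.
Context (R : realType).

Lemma sum_sq_ge0 (k : nat) (u : 'I_k -> R) : 0 <= \sum_(i < k) u i ^+ 2.
Proof. by apply: sumr_ge0 => i _; exact: sqr_ge0. Qed.

Lemma cs_ineq (k : nat) (u v : 'I_k -> R) :
  (\sum_(i < k) u i * v i) ^+ 2 <= (\sum_(i < k) u i ^+ 2) * (\sum_(i < k) v i ^+ 2).
Proof.
set A := \sum_(i < k) u i ^+ 2; set B := \sum_(i < k) v i ^+ 2.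
set C := \sum_(i < k) u i * v i.
have A0 : 0 <= A by exact: sum_sq_ge0.
have B0 : 0 <= B by exact: sum_sq_ge0.
have [A00|Apos] := eqVneq A 0.
  have u0 i : u i = 0.
    apply/eqP; rewrite -sqrf_eq0; apply/eqP.
    exact: (psumr_eq0P (fun j _ => sqr_ge0 (u j)) A00 isT).
  have -> : C = 0 by rewrite /C big1// => i _; rewrite u0 mul0r.
  by rewrite expr0n /= mulr_ge0.
have Agt0 : 0 < A by rewrite lt_def Apos A0.
pose t := - C / A.
have expand : \sum_(i < k) (t * u i + v i) ^+ 2 = t ^+ 2 * A + 2 * t * C + B.
  rewrite /A /B /C mulr_sumr mulr_sumr -!big_split /=.
  by apply: eq_bigr => i _; ring.
have : 0 <= \sum_(i < k) (t * u i + v i) ^+ 2 by exact: sum_sq_ge0.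
rewrite expand.
have -> : t ^+ 2 * A + 2 * t * C + B = B - C ^+ 2 / A.
  by rewrite /t; field; rewrite Apos.
by rewrite subr_ge0 ler_pdivrMr// mulrC.
Qed.

Lemma enorm_ge0 k (v : 'rV[R]_k) : 0 <= enorm v.
Proof. exact: sqrtr_ge0. Qed.

Lemma enormD k (u v : 'rV[R]_k) : enorm (u + v) <= enorm u + enorm v.
Proof.
rewrite /enorm.
set A := \sum_(i < k) u ord0 i ^+ 2; set B := \sum_(i < k) v ord0 i ^+ 2.
set C := \sum_(i < k) u ord0 i * v ord0 i.
have A0 : 0 <= A by exact: sum_sq_ge0.
have B0 : 0 <= B by exact: sum_sq_ge0.
have HC : C <= Num.sqrt A * Num.sqrt B.
  rewrite -sqrtrM//; apply: le_trans (ler_norm C) _.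
  rewrite -sqrtr_sqr ler_sqrt ?mulr_ge0//; exact: cs_ineq.
have -> : \sum_(i < k) (u + v) ord0 i ^+ 2 = A + 2 * C + B.
  rewrite /A /B /C mulr_sumr -!big_split /=.
  by apply: eq_bigr => i _; rewrite mxE; ring.
have s0 : 0 <= Num.sqrt A + Num.sqrt B by rewrite addr_ge0 ?sqrtr_ge0.
rewrite -(ger0_norm s0) -sqrtr_sqr ler_sqrt ?sqr_ge0//.
rewrite sqrrD !sqr_sqrtr//.
rewrite lerD2r lerD2l mulr2n; lra.
Qed.

Lemma enormN k (v : 'rV[R]_k) : enorm (- v) = enorm v.
Proof. by rewrite /enorm; congr Num.sqrt; apply: eq_bigr => i _; rewrite mxE sqrrN. Qed.

Lemma enorm_le_const k (v : 'rV[R]_k) (c : R) : 0 <= c ->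
  (forall i, `|v ord0 i| <= c) -> enorm v <= Num.sqrt k%:R * c.
Proof.
move=> c0 hv; rewrite /enorm -(ger0_norm c0) -sqrtr_sqr -sqrtrM ?ler0n//.
rewrite ler_sqrt ?mulr_ge0 ?ler0n ?sqr_ge0//.
apply: le_trans (_ : \sum_(i < k) c ^+ 2 <= _).
  apply: ler_sum => i _; rewrite -real_normK ?num_real//.
  by rewrite lerXn2r// ?nnegrE// (le_trans (hv i)).
by rewrite sumr_const card_ord mulr_natl.
Qed.

Lemma mx_coord_le k (v : 'rV[R]_k) i : `|v ord0 i| <= `|v|.
Proof.
rewrite [X in _ <= X]mx_normrE.
apply: (le_trans _ (le_bigmax _ _ (ord0, i))) => //=.
Qed.
End enorm_lemmas.
Section fill.
Context (R : realType) (d K : nat) (Pset : set 'rV[R]_d) (anc : 'I_K -> 'rV[R]_d).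

Let Tp (p : 'rV[R]_d) := [set enorm (p - anc j) | j in [set: 'I_K]].

Lemma Tp_lb p : has_lbound (Tp p).
Proof. by exists 0 => x [j _ <-]; exact: enorm_ge0. Qed.

Lemma fill_ge (cP : compact Pset) (hK : (0 < K)%N) p (Pp : Pset p) i
  (hmin : forall j, enorm (p - anc i) <= enorm (p - anc j)) :
  enorm (p - anc i) <= fill_distance Pset anc.
Proof.
have step1 : enorm (p - anc i) <= inf (Tp p).
  apply: lb_le_inf; first by exists (enorm (p - anc i)), i.
  by move=> x [j _ <-]; exact: hmin.
apply: le_trans step1 _.
apply: ub_le_sup; last by exists p.
case: (compact_bounded cP) => M0 [M0r HM].
have hb : forall q, Pset q -> `|q| <= M0 + 1.
  by move=> q Pq; apply: (HM (M0 + 1)) => //; rewrite ltrDl.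
pose i0 : 'I_K := Ordinal hK.
exists (Num.sqrt d%:R * (M0 + 1 + `|anc i0|)) => x [q Pq <-].
have h1 : inf (Tp q) <= enorm (q - anc i0) by apply: ge_inf; [exact: Tp_lb | exists i0].
apply: le_trans h1 _.
apply: enorm_le_const.
  by rewrite addr_ge0// (le_trans (normr_ge0 q) (hb q Pq)).
move=> j; rewrite !mxE; apply: le_trans (ler_normB _ _) _.
by apply: lerD; [exact: (le_trans (@mx_coord_le R _ q j) (hb q Pq)) | exact: mx_coord_le].
Qed.

Lemma fill_le0 (hne : exists p, Pset p)
  (hz : forall q, Pset q -> exists j, enorm (q - anc j) <= 0) :
  fill_distance Pset anc <= 0.
Proof.
apply: sup_le_ub; first by case: hne => p Pp; exists (inf (Tp p)), p.
move=> x [q Pq <-]; case: (hz q Pq) => j hj.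
by apply: le_trans hj; apply: ge_inf; [exact: Tp_lb | exists j].
Qed.
End fill.
Lemma union_bound d (Om : measurableType d) (R : realType) (P : {measure set Om -> \bar R})
  (I : finType) (F : I -> set Om) : (forall i, measurable (F i)) ->
  (P (\big[setU/set0]_i F i) <= \sum_i P (F i))%E.
Proof.
move=> mF.
suff : measurable (\big[setU/set0]_i F i) /\ (P (\big[setU/set0]_i F i) <= \sum_i P (F i))%E by case.
apply: (big_rec2 (fun U s => measurable U /\ (P U <= s)%E)).
  by split => //; rewrite measure0.
move=> i y1 y2 _ [my1 hy]; split; first exact: measurableU.
apply: le_trans (measureU2 _ _ _) _ => //; exact: leeD2l.
Qed.

Lemma bigmin_le (K : nat) (n : 'I_K -> nat) (s : seq 'I_K) x i : i \in s ->
  (\big[minn/x]_(j <- s) n j <= n i)%N.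
Proof.
elim: s => // a s IH; rewrite in_cons big_cons => /orP[/eqP->|/IH h].
  exact: geq_minl.
exact: leq_trans (geq_minr _ _) h.
Qed.

Lemma nmin_le (K : nat) (n : 'I_K -> nat) i : (nmin n <= n i)%N.
Proof. by rewrite /nmin; apply: bigmin_le; exact: mem_index_enum. Qed.

Lemma nmin_gt0 (K : nat) (n : 'I_K -> nat) : (0 < K)%N -> (forall i, 0 < n i)%N -> (0 < nmin n)%N.
Proof.
move=> hK hn; rewrite /nmin; apply: (big_ind (fun v => 0 < v)%N) => //.
- apply: (leq_trans (hn (Ordinal hK))). exact: leq_bigmax.
- by move=> x y x0 y0; rewrite leq_min x0 y0.
Qed.

Lemma sigma_max_ge (R : realType) (K : nat) (sigma : 'I_K -> R) i : sigma i <= sigma_max sigma.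
Proof. exact: le_bigmax. Qed.
Lemma indic_ge0' (R : realType) (U : Type) (A : set U) x : (0 : R) <= \1_A x.
Proof. by rewrite indicE ler0n. Qed.

Lemma mindic_comp d (Om : measurableType d) dY (Y : measurableType dY) (R : realType)
  (T : Om -> Y) (A : set Y) : measurable_fun setT T -> measurable A ->
  measurable_fun setT (fun w => (\1_A (T w) : R)).
Proof.
move=> mT mA; have := measurable_indic (R:=R) (D:=setT) mA. move=> mi; exact: (measurableT_comp mi mT).
Qed.

Section key.
Context d (Om : measurableType d) dY (Y : measurableType dY) (R : realType).
Variable mu : {measure set Om -> \bar R}.
Variable T : Om -> Y.
Hypothesis mT : measurable_fun setT T.

Import HBNNSimple.

Lemma key_nnsfun (G : Om -> R) : (forall w, 0 <= G w) -> measurable_fun setT G ->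
  forall h : {nnsfun Y >-> R},
  (\int[mu]_w (h (T w) * G w)%:E =
   \sum_(r \in range h) (r%:E * \int[mu]_w (\1_(h @^-1` [set r]) (T w) * G w)%:E))%E.
Proof.
move=> G0 mG h.
under eq_integral do rewrite fimfunE mulrC fsbig_distrr//= -fsumEFin//.
rewrite ge0_integral_fsum//; last 2 first.
- move=> r; apply/measurable_EFinP; apply: measurable_funM => //.
  apply: measurable_funM => //; exact: mindic_comp.
- move=> r w _; rewrite EFinM; apply: mule_ge0; first by rewrite lee_fin.
  rewrite EFinM; exact: (nnfun_muleindic_ge0 h r (T w)).
apply: eq_fsbigr => r /set_mem [y _ <-].
rewrite -ge0_integralZl_EFin//.
- apply: eq_integral => w _; by rewrite -EFinM; congr (_%:E); rewrite [LHS]mulrC -mulrA.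
- by move=> w _; rewrite lee_fin mulr_ge0 ?indic_ge0'.
- apply/measurable_EFinP; apply: measurable_funM => //; exact: mindic_comp.
Qed.
End key.
Section key2.
Context d (Om : measurableType d) dY (Y : measurableType dY) (R : realType).
Variable mu : {measure set Om -> \bar R}.
Variable T : Om -> Y.
Hypothesis mT : measurable_fun setT T.

Import HBNNSimple.

Lemma key_conv (f : Y -> R) (f0 : forall y, 0 <= f y) (mf : measurable_fun setT f)
  (mf' : measurable_fun setT (EFin \o f)) (G : Om -> R) :
  (forall w, 0 <= G w) -> measurable_fun setT G ->
  (\int[mu]_w (f (T w) * G w)%:E =
   limn (fun n => \int[mu]_w (nnsfun_approx measurableT mf' n (T w) * G w)%:E))%E.
Proof.
move=> G0 mG.
rewrite -monotone_convergence//; last 3 first.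
- move=> n; apply/measurable_EFinP; apply: measurable_funM => //.
  exact: (measurableT_comp (measurable_funP _) mT).
- by move=> n w _; rewrite lee_fin mulr_ge0.
- move=> w _ a b ab; rewrite lee_fin ler_wpM2r//.
  exact/lefP/nd_nnsfun_approx.
apply: eq_integral => w _; apply/esym/cvg_lim => //.
under eq_fun do rewrite EFinM.
rewrite EFinM; apply: cvgeZr => //.
have := @cvg_nnsfun_approx _ _ _ _ measurableT _ mf' (fun y _ => f0 y) (T w) I.
exact.
Qed.

Lemma key2 (G1 G2 : Om -> R) : (forall w, 0 <= G1 w) -> measurable_fun setT G1 ->
  (forall w, 0 <= G2 w) -> measurable_fun setT G2 ->
  (forall A, measurable A ->
     \int[mu]_w (\1_A (T w) * G1 w)%:E = \int[mu]_w (\1_A (T w) * G2 w)%:E)%E ->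
  forall f : Y -> R, (forall y, 0 <= f y) -> measurable_fun setT f ->
  (\int[mu]_w (f (T w) * G1 w)%:E = \int[mu]_w (f (T w) * G2 w)%:E)%E.
Proof.
move=> G10 mG1 G20 mG2 H f f0 mf.
have mf' : measurable_fun setT (EFin \o f) by exact/measurable_EFinP.
rewrite (@key_conv f f0 mf mf')// (@key_conv f f0 mf mf')//.
apply: (f_equal (fun g : nat -> \bar R => lim (g @ \oo))); apply/funext => n.
rewrite !key_nnsfun//; apply: eq_fsbigr => r _; rewrite H//.

Qed.
End key2.
Lemma mpre d (Om : measurableType d) dY (Y : measurableType dY) (X : Om -> Y) (B : set Y) :
  measurable_fun setT X -> measurable B -> measurable (X @^-1` B).
Proof. by move=> mX mB; have := mX measurableT B mB; rewrite setTI. Qed.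

Lemma mprod d (Om : measurableType d) (R : realType) (I : Type) (F : I -> Om -> R)
  (s : seq I) (Pp : pred I) : (forall i, measurable_fun setT (F i)) ->
  measurable_fun setT (fun w => \prod_(i <- s | Pp i) F i w).
Proof.
move=> mF; elim: s => [|x s IH].
  by under eq_fun do rewrite big_nil; exact: measurable_cst.
under eq_fun do rewrite big_cons.
case: (Pp x) => //; exact: measurable_funM.
Qed.

Section indep.
Context d (Om : measurableType d) (R : realType) (P : probability Om R) (I : finType)
  dY (Y : measurableType dY) (X : I -> Om -> Y).
Hypothesis mX : forall a, measurable_fun setT (X a).
Hypothesis indep : forall (J : {set I}) (B : I -> set Y), (forall a, measurable (B a)) ->
  P (\big[setI/setT]_(a in J) (X a @^-1` B a)) = (\prod_(a in J) P (X a @^-1` B a))%E.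
Variable phi : I -> Y -> R.
Hypothesis phi0 : forall a y, 0 <= phi a y.
Hypothesis mphi : forall a, measurable_fun setT (phi a).
Hypothesis finE : forall a, (\int[P]_w (phi a (X a w))%:E)%E \is a fin_num.

Let Ex a := (\int[P]_w (phi a (X a w))%:E)%E.

Lemma prod_indic (K : {set I}) (B : I -> set Y) w :
  \prod_(c in K) \1_(B c) (X c w) = \1_(\big[setI/setT]_(c in K) X c @^-1` B c) w :> R.
Proof.
apply: (big_rec2 (fun x y => x = \1_y w)).
  by rewrite indicT.
by move=> i y1 y2 _ ->; rewrite indicI.
Qed.

Lemma indep_Q n : forall J : {set I}, #|J| = n ->
  forall K : {set I}, (forall c, c \in K -> c \notin J) ->
  forall B : I -> set Y, (forall a, measurable (B a)) ->
  (\int[P]_w ((\prod_(a in J) phi a (X a w)) * \prod_(c in K) \1_(B c) (X c w))%:E =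
   (\prod_(a in J) Ex a) * \prod_(c in K) P (X c @^-1` B c))%E.
Proof.
elim: n => [|n IH] J cJ K dJK B mB.
  rewrite (cards0_eq cJ) !big_set0 mul1e.
  under eq_integral do rewrite big_set0 mul1r prod_indic.
  rewrite integral_indic// ?setIT.
    exact: indep.
  by apply: bigsetI_measurable => a _; exact: mpre.
have [b bJ] : exists b, b \in J by apply/card_gt0P; rewrite cJ.
have cJ' : #|J :\ b| = n by move: cJ; rewrite (cardsD1 b) bJ => -[].
rewrite (big_setD1 b bJ) /=.
under eq_integral do rewrite (big_setD1 b bJ) /=.
pose G w := (\prod_(a in J :\ b) phi a (X a w)) * \prod_(c in K) \1_(B c) (X c w).
have G0 w : 0 <= G w.
  by rewrite mulr_ge0// prodr_ge0// => *; exact: indic_ge0'.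
have mG : measurable_fun setT G.
  apply: measurable_funM; apply: mprod => a.
    exact: (measurableT_comp (mphi a) (mX a)).
  exact: mindic_comp.
pose c0 := ((\prod_(a in J :\ b) Ex a) * \prod_(c in K) P (X c @^-1` B c))%E.
have fc0 : c0 \is a fin_num.
  rewrite fin_numM// prode_fin_num// => c _; first exact: finE.
  apply: fin_num_measure; exact: mpre.
have c00 : (0 <= c0)%E.
  apply: mule_ge0; apply: prode_ge0 => c _.
    by apply: integral_ge0 => w _; rewrite lee_fin.
  exact: measure_ge0.
have Hkey : forall A, measurable A ->
    (\int[P]_w (\1_A (X b w) * G w)%:E = \int[P]_w (\1_A (X b w) * fine c0)%:E)%E.
  move=> A mA.
  pose B' c := if c == b then A else B c.
  have mB' c : measurable (B' c) by rewrite /B'; case: ifP.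
  have bK : b \notin K by apply/negP => /dJK; rewrite bJ.
  have dJK' : forall c, c \in b |: K -> c \notin J :\ b.
    move=> c; rewrite !inE => /orP[/eqP ->|cK]; first by rewrite eqxx.
    by rewrite (negbTE (dJK c cK)) andbF.
  transitivity (\int[P]_w ((\prod_(a in J :\ b) phi a (X a w)) *
                  \prod_(c in b |: K) \1_(B' c) (X c w))%:E)%E.
    apply: eq_integral => w _; congr (_%:E).
    rewrite big_setU1//= /B' eqxx /G mulrCA; congr (_ * (_ * _)).
    apply: eq_bigr => c cK; case: ifP => // /eqP cb.
    by move: bK; rewrite -cb cK.
  have EK : (\prod_(c in K) P (X c @^-1` B' c) = \prod_(c in K) P (X c @^-1` B c))%E.
    apply: eq_bigr => c cK; rewrite /B'; case: ifP => // /eqP cb.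
    by move: bK; rewrite -cb cK.
  rewrite (IH _ cJ' _ dJK' _ mB') big_setU1//= EK /B' eqxx.
  under eq_integral do rewrite mulrC EFinM.
  rewrite ge0_integralZl_EFin//.
  - rewrite integral_indic ?setIT ?fineK//; last exact: mpre.
    by rewrite /c0 -muleA; congr (_ * _)%E; exact: muleC.
  - apply/measurable_EFinP; exact: mindic_comp.
  - exact: fine_ge0.
have := @key2 _ _ _ _ _ P (X b) (mX b) G (fun _ => fine c0) G0 mG (fun _ => fine_ge0 c00) (measurable_cst _) Hkey (phi b) (phi0 b) (mphi b).
under eq_integral do rewrite mulrA.
move=> ->.
under eq_integral do rewrite EFinM.
rewrite ge0_integralZr//; last 3 first.
- exact/measurable_EFinP/(measurableT_comp (mphi b) (mX b)).
- by move=> w _; rewrite lee_fin.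
- by rewrite lee_fin fine_ge0.
by rewrite fineK// /c0 muleA.
Qed.

Lemma indep_prod (J : {set I}) :
  (\int[P]_w (\prod_(a in J) phi a (X a w))%:E = \prod_(a in J) Ex a)%E.
Proof.
have h0 : forall c, c \in (finset.set0 : {set I}) -> c \notin J by move=> c; rewrite inE.
have := @indep_Q _ J erefl finset.set0 h0 (fun _ => setT) (fun _ => measurableT).
rewrite !big_set0 mule1.
by under eq_integral do rewrite big_set0 mulr1.
Qed.
End indep.
Lemma expR_ge1 (R : realType) (x : R) : 0 <= x -> 1 <= expR x.
Proof. by move=> x0; apply: le_trans (expR_ge1Dx x); rewrite lerDl. Qed.

Lemma lee_prod_ge0 (R : realType) (I : Type) (s : seq I) (F G : I -> \bar R) :
  (forall i, (0 <= F i)%E) -> (forall i, (F i <= G i)%E) ->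
  (\prod_(i <- s) F i <= \prod_(i <- s) G i)%E.
Proof.
move=> F0 FG.
suff : (0 <= \prod_(i <- s) F i)%E /\ (\prod_(i <- s) F i <= \prod_(i <- s) G i)%E by case.
apply: (big_ind2 (fun x y => (0 <= x)%E /\ (x <= y)%E)) => //.
- by move=> x1 x2 y1 y2 [x10 x12] [y10 y12]; split; [exact: mule_ge0|exact: lee_pmul].
Qed.

Section chernoff.
Context d (Om : measurableType d) (R : realType) (P : probability Om R) (N : nat)
  (Z : 'I_N -> Om -> R) (sig : R).
Hypothesis mZ : forall j, measurable_fun setT (Z j).
Hypothesis hprod : forall lam : R,
  (\int[P]_w (expR (lam * \sum_(j < N) Z j w))%:E =
   \prod_(j < N) \int[P]_w (expR (lam * Z j w))%:E)%E.
Hypothesis hsg : forall j (lam : R),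
  (\int[P]_w (expR (lam * Z j w))%:E <= (expR (sig ^+ 2 * lam ^+ 2 / 2))%:E)%E.

Lemma chernoff (lam a : R) : 0 <= lam ->
  (P [set w | (a < \sum_(j < N) Z j w)%R] <=
   (expR (- (lam * a) + N%:R * (sig ^+ 2 * lam ^+ 2 / 2)))%:E)%E.
Proof.
move=> lam0.
pose S w := \sum_(j < N) Z j w.
have mS : measurable_fun setT S by apply: measurable_sum.
have -> : [set w | a < \sum_(j < N) Z j w] = S @^-1` `]a, +oo[.
  by apply/seteqP; split => w /=; rewrite in_itv /= andbT.
have mA : measurable (S @^-1` `]a, +oo[) by apply: mpre => //; exact: measurable_itv.
rewrite -[S @^-1` _]setIT -integral_indic//.
apply: (@le_trans _ _ (\int[P]_w (expR (- (lam * a)) * expR (lam * S w))%:E)%E).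
  apply: ge0_le_integral => //.
  - apply/measurable_EFinP; exact: measurable_indic.
  - apply/measurable_EFinP; apply: measurable_funM; first exact: measurable_cst.
    exact: (measurableT_comp (@measurable_expR R) (measurable_funM (measurable_cst _) mS)).
  - move=> w _; rewrite lee_fin -expRD indicE.
    case: (boolP (w \in _)) => [/set_mem /=|_]; last exact: expR_ge0.
    rewrite in_itv /= andbT => aS; apply: expR_ge1.
    by rewrite addrC -mulrBr mulr_ge0// subr_ge0 ltW.
rewrite (eq_integral (fun w => (expR (- (lam * a)))%:E * (expR (lam * S w))%:E)%E); last by move=> w _; rewrite EFinM.
rewrite ge0_integralZl//; last first.
  apply/measurable_EFinP.
  exact: (measurableT_comp (@measurable_expR R) (measurable_funM (measurable_cst _) mS)).
rewrite /S hprod expRD EFinM lee_pmul// ?lee_fin ?expR_ge0//.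
  by apply: prode_ge0 => j _; apply: integral_ge0 => w _; rewrite lee_fin expR_ge0.
apply: (@le_trans _ _ (\prod_(j < N) (expR (sig ^+ 2 * lam ^+ 2 / 2))%:E)%E).
  apply: lee_prod_ge0 => j; last exact: hsg.
  by apply: integral_ge0 => w _; rewrite lee_fin expR_ge0.
rewrite prodEFin lee_fin -expR_sum sumr_const card_ord mulr_natl.
by [].
Qed.
End chernoff.
Section tail.
Context d (Om : measurableType d) (R : realType) (P : probability Om R) (N : nat)
  (Z : 'I_N -> Om -> R) (sig : R).
Hypothesis mZ : forall j, measurable_fun setT (Z j).
Hypothesis hprod : forall lam : R,
  (\int[P]_w (expR (lam * \sum_(j < N) Z j w))%:E =
   \prod_(j < N) \int[P]_w (expR (lam * Z j w))%:E)%E.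
Hypothesis hsg : forall j (lam : R),
  (\int[P]_w (expR (lam * Z j w))%:E <= (expR (sig ^+ 2 * lam ^+ 2 / 2))%:E)%E.

Let S w := \sum_(j < N) Z j w.

Lemma mS : measurable_fun setT S.
Proof. exact: measurable_sum. Qed.

Lemma null_small (A : set Om) : measurable A -> (forall e : R, 0 < e -> (P A <= e%:E)%E) -> P A = 0%E.
Proof.
move=> mA h; apply/eqP; rewrite eq_le measure_ge0 andbT.
by apply/lee_addgt0Pr => e e0; rewrite add0e; exact: h.
Qed.

Lemma tail_zero : sig = 0 -> P [set w | (0 < S w)%R] = 0%E.
Proof.
move=> s0.
pose F (k : nat) := [set w | ((k.+1)%:R^-1 < S w)%R].
have mpreS a : measurable [set w | (a < S w)%R].
  have -> : [set w | (a < S w)%R] = S @^-1` `]a, +oo[.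
    by apply/seteqP; split => w /=; rewrite in_itv /= andbT.
  by apply: mpre; [exact: mS | exact: measurable_itv].
have FN k : P (F k) = 0%E.
  apply: null_small; first exact: mpreS.
  move=> e e0.
  have [e1|e1] := leP 1 e.
    by apply: le_trans (probability_le1 _ _) _; [exact: mpreS | rewrite lee_fin].
  pose lam := (k.+1)%:R * (- ln e).
  have lam0 : 0 <= lam by rewrite mulr_ge0// oppr_ge0 ln_le0// ltW.
  have := @chernoff _ _ _ P N Z sig mZ hprod hsg lam ((k.+1)%:R^-1) lam0.
  rewrite s0 expr0n /= !mul0r mulr0 addr0 /lam mulrAC mulfV ?mul1r ?opprK ?lnK//.
have : (P [set w | (0 < S w)%R] <= \sum_(k <oo) P (F k))%E.
  apply: measure_sigma_subadditive => //; first by move=> k; exact: mpreS.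
  move=> w /= Sw0; have [k _ hk] : exists2 k : nat, True & ((k.+1)%:R^-1 < S w)%R.
    by have [k hk] := ltr_add_invr Sw0; exists k; rewrite // -[X in (X < _)%R]add0r.
  by exists k.
rewrite eseries0 ?FN// => h.
by apply/eqP; rewrite eq_le measure_ge0 h.
Qed.

Lemma tail_bound (c l : R) : (0 < N)%N -> 0 <= sig -> 0 <= c -> 0 <= l ->
  (c = 0 -> sig = 0) -> 2 * sig ^+ 2 * l <= N%:R * c ^+ 2 ->
  (P [set w | (c * N%:R < S w)%R] <= (expR (- l))%:E)%E.
Proof.
move=> N0 sig0 c0 l0 hc hcl.
have N0' : (0 : R) < N%:R by rewrite ltr0n.
have [c00|cpos] := eqVneq c 0.
  rewrite c00 mul0r tail_zero ?lee_fin ?expR_ge0//; exact: hc.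
have cgt0 : 0 < c by rewrite lt_def cpos c0.
have [s00|spos] := eqVneq sig 0.
  pose lam := l / (c * N%:R).
  have lam0 : 0 <= lam by rewrite divr_ge0// mulr_ge0// ltW.
  apply: le_trans (@chernoff _ _ _ P N Z sig mZ hprod hsg lam (c * N%:R) lam0) _.
  rewrite lee_fin ler_expR s00 expr0n /= !mul0r mulr0 addr0 /lam divfK//.
  by rewrite mulf_neq0// gt_eqF.
have sgt0 : 0 < sig by rewrite lt_def spos sig0.
pose lam := c / sig ^+ 2.
have lam0 : 0 <= lam by rewrite divr_ge0// sqr_ge0.
apply: le_trans (@chernoff _ _ _ P N Z sig mZ hprod hsg lam (c * N%:R) lam0) _.
rewrite lee_fin ler_expR.
have -> : - (lam * (c * N%:R)) + N%:R * (sig ^+ 2 * lam ^+ 2 / 2) =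
   - (N%:R * c ^+ 2 / (2 * sig ^+ 2)).
  by rewrite /lam; field; rewrite spos.
rewrite lerN2 ler_pdivlMr ?mulr_gt0 ?exprn_gt0//.
by apply: le_trans hcl; rewrite mulrC mulrA.
Qed.
End tail.
Theorem theoremA6 (R : realType) (d m K : nat) (Z Tm : Type)
  (fstar : Z -> 'rV[R]_d -> Tm -> 'rV[R]_m)
  (Pset : set 'rV[R]_d) (anc : 'I_K -> 'rV[R]_d) (idx : 'rV[R]_d -> 'I_K)
  (z : Z) (t : Tm) (L : R)
  (dom : measure_display) (Omega : measurableType dom) (Pr : probability Omega R)
  (n : 'I_K -> nat) (sigma : 'I_K -> R)
  (eps : forall i : 'I_K, 'I_(n i) -> Omega -> 'rV[R]_m)
  (fhat : Z -> 'rV[R]_d -> Tm -> Omega -> 'rV[R]_m)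
  (delta : R) :
  compact Pset ->
  (0 < K)%N ->
  (forall i, Pset (anc i)) ->
  (forall p, Pset p -> forall i, enorm (p - anc (idx p)) <= enorm (p - anc i)) ->
  (* (i) Lipschitz in p *)
  (forall (z' : Z) (t' : Tm) p p', Pset p -> Pset p' ->
     enorm (fstar z' p t' - fstar z' p' t') <= L * enorm (p - p')) ->
  (* (ii) nearest-anchor predictor *)
  (forall p w, Pset p -> fhat z p t w = fhat z (anc (idx p)) t w) ->
  (* (iii) noisy observations averaged at each anchor *)
  (forall i, (0 < n i)%N) ->
  (forall i, 0 <= sigma i) ->
  mutually_independent Pr (fun a : {i : 'I_K & 'I_(n i)} => eps (tag a) (tagged a)) ->
  (forall i j k, measurable_fun setT (fun w => eps i j w ord0 k)) ->
  (forall i j k, mean_zero Pr (fun w => eps i j w ord0 k)) ->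
  (forall i j k, sub_gaussian Pr (sigma i) (fun w => eps i j w ord0 k)) ->
  (forall i w, fhat z (anc i) t w =
     (n i)%:R^-1 *: \sum_(j < n i) (fstar z (anc i) t + eps i j w)) ->
  0 < delta < 1 ->
  exists E : set Omega, measurable E /\ ((1 - delta)%:E <= Pr E)%E /\
    forall w, E w ->
      (ereal_sup [set (enorm (fhat z p t w - fstar z p t))%:E | p in Pset] <=
       (sigma_max sigma *
          Num.sqrt (2 * m%:R * ln (2 * m%:R * K%:R / delta) / (nmin n)%:R)
        + L * fill_distance Pset anc)%:E)%E.
Proof.
Proof.
move=> cP hK ancP hidx hLip hfhat hn hsig indep meps mz hsg hfavg /andP[d0 d1].
set nm := nmin n. set sm := sigma_max sigma.
set l := ln (2 * m%:R * K%:R / delta).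
pose c := sm * Num.sqrt (2 * l / nm%:R).
have nm0 : (0 < nm)%N by exact: nmin_gt0.
have nmle i : (nm <= n i)%N by exact: nmin_le.
have smle i : sigma i <= sm by exact: sigma_max_ge.
have sm0 : 0 <= sm by exact: le_trans (hsig (Ordinal hK)) (smle _).
have Kpos : (0 : R) < K%:R by rewrite ltr0n.
have lpos : (0 < m)%N -> 0 < l.
  move=> m0; apply: ln_gt0; rewrite ltr_pdivlMr// mul1r.
  apply: lt_le_trans d1 _; rewrite -natrM -natrM ler1n muln_gt0 muln_gt0 m0 hK//.
have l0 : 0 <= l.
  have [m00|m0] := posnP m; last exact: ltW (lpos m0).
  by rewrite /l m00 mulr0 mul0r mul0r ln0.
have c0 : 0 <= c by rewrite mulr_ge0// sqrtr_ge0.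
pose Y i k w := (n i)%:R^-1 * \sum_(j < n i) eps i j w ord0 k.
pose sg (b : bool) : R := if b then 1 else -1.
pose bad (x : 'I_K * 'I_m * bool) := [set w | c < sg x.2 * Y x.1.1 x.1.2 w].
have mY i k : measurable_fun setT (Y i k).
  apply: measurable_funM; first exact: measurable_cst.
  by apply: measurable_sum => j; exact: meps.
have mbad x : measurable (bad x).
  have -> : bad x = (fun w => sg x.2 * Y x.1.1 x.1.2 w) @^-1` `]c, +oo[.
    by apply/seteqP; split => w /=; rewrite in_itv /= andbT.
  apply: mpre; last exact: measurable_itv.
  apply: measurable_funM => //; exact: measurable_cst.
have Pbad x : (Pr (bad x) <= (delta / (2 * m%:R * K%:R))%:E)%E.
  case: x => [[i k] b].
  have m0 : (0 < m)%N := leq_ltn_trans (leq0n _) (ltn_ord k).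
  pose Zf (j : 'I_(n i)) w := sg b * eps i j w ord0 k.
  have eY w : sg b * Y i k w = (\sum_(j < n i) Zf j w) / (n i)%:R.
    by rewrite /Y mulrCA mulr_sumr mulrC.
  have ebad : bad (i, k, b) = [set w | (c * (n i)%:R < \sum_(j < n i) Zf j w)%R].
    by apply/seteqP; split => w; rewrite /bad /= eY ltr_pdivlMr// ltr0n hn.
  rewrite ebad.
  have hexp : expR (- l) = delta / (2 * m%:R * K%:R).
    rewrite expRN lnK ?invf_div// posrE divr_gt0// !mulr_gt0// ltr0n//.
  rewrite -hexp.
  have mZ j : measurable_fun setT (Zf j).
    by apply: measurable_funM; [exact: measurable_cst | exact: meps].
  have sg2 : forall b0, sg b0 ^+ 2 = 1 by case; rewrite /sg ?expr1n ?sqrrN ?expr1n.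
  have hsg' j lam : (\int[Pr]_w (expR (lam * Zf j w))%:E <=
      (expR (sigma i ^+ 2 * lam ^+ 2 / 2))%:E)%E.
    under eq_integral do rewrite /Zf mulrA.
    apply: le_trans (hsg i j k (lam * sg b)) _.
    by rewrite exprMn sg2 mulr1.
  have hprod : forall lam : R,
      (\int[Pr]_w (expR (lam * \sum_(j < n i) Zf j w))%:E =
       \prod_(j < n i) \int[Pr]_w (expR (lam * Zf j w))%:E)%E.
    move=> lam.
    pose I := {i0 : 'I_K & 'I_(n i0)}.
    pose X (a : I) w := tuple_of_row (eps (tag a) (tagged a) w).
    pose phi (a : I) (tt : m.-tuple R) := expR (lam * sg b * tnth tt k).
    have mX a : measurable_fun setT (X a).
      apply/measurable_fun_tnthP => k'.
      have -> : (tnth (T:=R))^~ k' \o X a = fun w => eps (tag a) (tagged a) w ord0 k'.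
        by apply/funext => w; rewrite /= /X /tuple_of_row tnth_mktuple.
      exact: meps.
    have ind : forall (J : {set I}) (B : I -> set (m.-tuple R)), (forall a, measurable (B a)) ->
        Pr (\big[setI/setT]_(a in J) (X a @^-1` B a)) = (\prod_(a in J) Pr (X a @^-1` B a))%E.
      exact: indep.
    have phi0 a y : 0 <= phi a y by exact: expR_ge0.
    have mphi a : measurable_fun setT (phi a).
      apply: (measurableT_comp (@measurable_expR R)).
      by apply: measurable_funM; [exact: measurable_cst | exact: measurable_tnth].
    have phiX a w : phi a (X a w) = expR (lam * sg b * eps (tag a) (tagged a) w ord0 k).
      by rewrite /phi /X /tuple_of_row tnth_mktuple.
    have finE a : (\int[Pr]_w (phi a (X a w))%:E)%E \is a fin_num.
      rewrite ge0_fin_numE; last by apply: integral_ge0 => w _; rewrite lee_fin.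
      under eq_integral do rewrite phiX.
      apply: le_lt_trans (hsg (tag a) (tagged a) k (lam * sg b)) _; exact: ltry.
    pose tg (j : 'I_(n i)) : I := Tagged (fun i0 => 'I_(n i0)) j.
    pose J : {set I} := (tg @: [set: 'I_(n i)])%SET.
    have hinj : {in [set: 'I_(n i)]%SET &, injective tg}.
      move=> j1 j2 _ _ h.
      have := congr1 (tagged_as (Tagged (fun i0 => 'I_(n i0)) j1)) h.
      by rewrite !tagged_asE.
    have := @indep_prod _ _ _ Pr I _ _ X mX ind phi phi0 mphi finE J.
    rewrite /J !big_imset //= => h.
    have e1 w : \prod_(j in [set: 'I_(n i)]%SET) phi (tg j) (X (tg j) w) =
        expR (lam * \sum_(j < n i) Zf j w).
      rewrite mulr_sumr expR_sum.
      by apply: eq_big => [j|j _]; [rewrite inE | rewrite phiX /Zf mulrA].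
    have e2 : (\prod_(j in [set: 'I_(n i)]%SET) \int[Pr]_w (phi (tg j) (X (tg j) w))%:E =
        \prod_(j < n i) \int[Pr]_w (expR (lam * Zf j w))%:E)%E.
      apply: eq_big => [j|j _]; first by rewrite inE.
      by apply: eq_integral => w _; rewrite phiX /Zf mulrA.
    rewrite -e2 -h.
    by apply: eq_integral => w _; rewrite big_imset //= e1.
  have hc : c = 0 -> sigma i = 0.
    have spos : 0 < Num.sqrt (2 * l / nm%:R).
      by rewrite sqrtr_gt0 divr_gt0 ?mulr_gt0 ?lpos ?ltr0n.
    move=> /eqP; rewrite /c mulf_eq0 (gt_eqF spos) orbF => /eqP sm00.
    by apply/le_anti; rewrite hsig andbT -sm00.
  have hcl : 2 * sigma i ^+ 2 * l <= (n i)%:R * c ^+ 2.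
    have nmpos : (0 : R) < nm%:R by rewrite ltr0n.
    have h3 : sigma i ^+ 2 * nm%:R <= sm ^+ 2 * (n i)%:R.
      apply: ler_pM; rewrite ?sqr_ge0 ?ler0n ?ler_nat//.
      by rewrite !expr2; exact: ler_pM (hsig i) (hsig i) (smle i) (smle i).
    have -> : (n i)%:R * c ^+ 2 = sm ^+ 2 * (n i)%:R * (2 * l) / nm%:R.
      by rewrite /c exprMn sqr_sqrtr ?divr_ge0 ?mulr_ge0 ?ler0n//; field; rewrite gt_eqF.
    rewrite ler_pdivlMr//.
    have h4 := ler_wpM2r (mulr_ge0 (ler0n _ 2) l0) h3.
    apply: le_trans h4; rewrite le_eqVlt; apply/orP; left; apply/eqP; ring.
  exact: (@tail_bound _ _ _ Pr (n i) Zf (sigma i) mZ hprod hsg' c l (hn i) (hsig i) c0 l0 hc hcl).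
pose U := \big[setU/set0]_(x : 'I_K * 'I_m * bool) bad x.
have mU : measurable U by apply: bigsetU_measurable => x _; exact: mbad.
have PU : (Pr U <= delta%:E)%E.
  apply: (le_trans (@union_bound _ _ _ Pr _ bad mbad)).
  apply: (@le_trans _ _ (\sum_(x : 'I_K * 'I_m * bool) (delta / (2 * m%:R * K%:R))%:E)%E).
    by apply: lee_sum => x _; exact: Pbad.
  rewrite sumEFin lee_fin sumr_const !card_prod !card_ord card_bool.
  have [m00|m0] := posnP m.
    by rewrite m00 muln0 mul0n mulr0n ltW.
  rewrite -[_ *+ (K * m * 2)]mulr_natr.
  have -> : delta / (2 * m%:R * K%:R) * (K * m * 2)%:R = delta.
    rewrite !natrM; field.
    by rewrite !pnatr_eq0 -!lt0n hK m0.
  by [].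
exists (~` U); split; first exact: measurableC.
split.
  rewrite probability_setC// EFinB; apply: leeB => //.
move=> w Uw.
have nb x : ~ bad x w.
  by move=> bx; apply: Uw; rewrite /U (bigD1 x) //=; left.
have hY i k : `|Y i k w| <= c.
  have := nb (i, k, true); rewrite /bad /= mul1r => /negP; rewrite -leNgt => h1.
  have := nb (i, k, false); rewrite /bad /= mulN1r => /negP; rewrite -leNgt lerNl => h2.
  by rewrite ler_norml h1 h2.
apply: ge_ereal_sup => _ [p Pp <-]; rewrite lee_fin.
set i := idx p.
have e1 : fhat z p t w - fstar z p t =
    (fhat z (anc i) t w - fstar z (anc i) t) + (fstar z (anc i) t - fstar z p t).
  by rewrite (hfhat p w Pp) addrA subrK.
have nipos : (n i)%:R != 0 :> R by rewrite pnatr_eq0 -lt0n hn.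
have e2 k : (fhat z (anc i) t w - fstar z (anc i) t) ord0 k = Y i k w.
  rewrite hfavg big_split /= sumr_const card_ord -[fstar z (anc i) t *+ n i]scaler_nat scalerDr scalerA mulVf// scale1r.
  by rewrite addrAC subrr add0r mxE summxE.
have e3 : enorm (fhat z (anc i) t w - fstar z (anc i) t) <= Num.sqrt m%:R * c.
  by apply: enorm_le_const => // k; rewrite e2; exact: hY.
have e4 : enorm (fstar z (anc i) t - fstar z p t) <= L * enorm (p - anc i).
  by apply: le_trans (hLip z t (anc i) p (ancP i) Pp) _; rewrite -opprB enormN.
have e5 : L * enorm (p - anc i) <= L * fill_distance Pset anc.
  have [L0|L0] := leP 0 L.
    apply: ler_wpM2l => //; apply: fill_ge => //; exact: hidx.
  have ez q : Pset q -> enorm (q - anc (idx q)) <= 0.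
    move=> Pq; rewrite -(nmulr_rge0 _ L0).
    have h := hLip z t q (anc (idx q)) Pq (ancP _).
    apply: (le_trans _ h); exact: enorm_ge0.
  have -> : enorm (p - anc i) = 0 by apply/le_anti; rewrite ez// enorm_ge0.
  rewrite mulr0 nmulr_rge0//; apply: fill_le0; first by exists (anc (Ordinal hK)).
  by move=> q Pq; exists (idx q); exact: ez.
rewrite e1; apply: le_trans (enormD _ _ _ _) _.
have -> : sm * Num.sqrt (2 * m%:R * l / nm%:R) = Num.sqrt m%:R * c.
  rewrite /c mulrCA -sqrtrM ?ler0n//; congr (_ * Num.sqrt _); ring.
apply: lerD => //; exact: le_trans e4 e5.
Qed.
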